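(* Let $\mathcal{J}\neq\emptyset$ be a countable set, $\{e_{j,k}:j\in\mathcal{J},k\in\mathbb{N}_0\}$ an orthonormal basis of $\mathcal{H}$, and $\{w_{j,k}\}\subseteq\mathbb{C}$ a bounded family. Define $B\in\mathcal{B}(\mathcal{H})$ by $Be_{j,0}=0$ and $Be_{j,k}=w_{j,k-1}e_{j,k-1}$ for $k\ge1$. Then: (i) if no weight is zero, $B$ is cyclic; (ii) if no weight is zero and there is $g\in\bigcap_{n\ge1}\operatorname{ran}(B^n)$ such that for each $j\in\mathcal{J}$ we have $\langle g,e_{j,k}\rangle\neq0$ for infinitely many $k$, then $B$ has a cyclic vector belonging to $\bigcap_{n\ge1}\operatorname{ran}(B^n)$; (iii) $B$ is cyclic if and only if at most one weight $w_{j,k}$ is zero.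
   Context: An operator $T$ is cyclic if there is $h$ (a cyclic vector) with $\bigvee\{T^nh:n\in\mathbb{N}_0\}=\mathcal{H}$. *)

(* Defs.v *)
(* classical reals. The Hilbert space H with orthonormal basis
   {e_{j,k}} is modelled concretely by its coordinates: H = l^2(J x N_0),
   e_{j,k} = indicator of (j,k), <x, e_{j,k}> = x j k. *)
From Stdlib Require Import Reals List.
Open Scope R_scope.

Definition Cx := (R * R)%type.
Definition C0 : Cx := (0, 0).
Definition Cadd (a b : Cx) : Cx := (fst a + fst b, snd a + snd b).
Definition Csub (a b : Cx) : Cx := (fst a - fst b, snd a - snd b).
Definition Cmul (a b : Cx) : Cx :=
  (fst a * fst b - snd a * snd b, fst a * snd b + snd a * fst b).
Definition Cnorm2 (a : Cx) : R := fst a * fst a + snd a * snd a.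

Definition vec (J : Type) := J -> nat -> Cx.

Definition psum {J : Type} (x : vec J) (L : list (J * nat)) : R :=
  fold_right Rplus 0 (map (fun p => Cnorm2 (x (fst p) (snd p))) L).

Definition in_l2 {J : Type} (x : vec J) : Prop :=
  exists M : R, forall L : list (J * nat), NoDup L -> psum x L <= M.

Definition norm2_le {J : Type} (x : vec J) (eps : R) : Prop :=
  forall L : list (J * nat), NoDup L -> psum x L <= eps.

Definition vsub {J : Type} (x y : vec J) : vec J := fun j k => Csub (x j k) (y j k).

(* The weighted backward shift: B e_{j,0} = 0, B e_{j,k+1} = w_{j,k} e_{j,k};
   in coordinates (B x)_{j,k} = w_{j,k} x_{j,k+1}. *)
Definition Bop {J : Type} (w : J -> nat -> Cx) (x : vec J) : vec J :=
  fun j k => Cmul (w j k) (x j (S k)).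

(* p(B) h for p = c_0 + c_1 X + ... (coefficient list, Horner scheme) *)
Fixpoint polyB {J : Type} (w : J -> nat -> Cx) (cs : list Cx) (h : vec J) : vec J :=
  match cs with
  | nil => fun _ _ => C0
  | c :: cs' => fun j k => Cadd (Cmul c (h j k)) (Bop w (polyB w cs' h) j k)
  end.

Definition cyclic_vector {J : Type} (w : J -> nat -> Cx) (h : vec J) : Prop :=
  in_l2 h /\
  forall y : vec J, in_l2 y -> forall eps : R, 0 < eps ->
    exists cs : list Cx, norm2_le (vsub y (polyB w cs h)) eps.

Definition cyclic {J : Type} (w : J -> nat -> Cx) : Prop :=
  exists h : vec J, cyclic_vector w h.

Definition in_ran_pow {J : Type} (w : J -> nat -> Cx) (n : nat) (g : vec J) : Prop :=
  exists x : vec J, in_l2 x /\ g = Nat.iter n (Bop w) x.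

Definition in_all_ran {J : Type} (w : J -> nat -> Cx) (g : vec J) : Prop :=
  forall n : nat, (1 <= n)%nat -> in_ran_pow w n g.

(* Main.v *)
Require Import Defs.
From Stdlib Require Import Reals List Lia Lra ClassicalEpsilon FunctionalExtensionality.
Open Scope R_scope.

Ltac cx := apply injective_projections; unfold Cadd, Csub, Cmul, C0; simpl; ring.

Definition emi := excluded_middle_informative.

Lemma Cnorm2_nonneg (a : Cx) : 0 <= Cnorm2 a.
Proof. unfold Cnorm2. nra. Qed.

Lemma Cnorm2_mul (a b : Cx) : Cnorm2 (Cmul a b) = Cnorm2 a * Cnorm2 b.
Proof. unfold Cnorm2, Cmul; simpl. ring. Qed.

Lemma Cnorm2_C0 : Cnorm2 C0 = 0.
Proof. unfold Cnorm2, C0; simpl; ring. Qed.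

Lemma Cnorm2_zero (a : Cx) : Cnorm2 a = 0 -> a = C0.
Proof. destruct a as [x y]; unfold Cnorm2, C0; simpl; intro H.
  assert (x = 0) by nra. assert (y = 0) by nra. subst; reflexivity. Qed.

Lemma Cnorm2_pos (a : Cx) : a <> C0 -> 0 < Cnorm2 a.
Proof. intro H. destruct (Cnorm2_nonneg a); auto. exfalso; apply H, Cnorm2_zero; auto. Qed.

Lemma Cnorm2_add (a b : Cx) : Cnorm2 (Cadd a b) <= 2 * Cnorm2 a + 2 * Cnorm2 b.
Proof. destruct a as [x y]; destruct b as [u v]; unfold Cnorm2, Cadd; simpl. pose proof (pow2_ge_0 (x-u)); pose proof (pow2_ge_0 (y-v)). nra. Qed.

Definition Cinv (a : Cx) : Cx := (fst a / Cnorm2 a, - snd a / Cnorm2 a).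

Lemma Cmul_inv (a : Cx) : a <> C0 -> Cmul a (Cinv a) = (1, 0).
Proof. intro H. pose proof (Cnorm2_pos a H) as P. destruct a as [x y].
  unfold Cmul, Cinv, Cnorm2 in *; simpl in *. apply injective_projections; simpl; field; lra. Qed.

Lemma Cnorm2_inv (a : Cx) : a <> C0 -> Cnorm2 (Cinv a) = / Cnorm2 a.
Proof. intro H. pose proof (Cnorm2_pos a H) as P. destruct a as [x y].
  unfold Cinv, Cnorm2 in *; simpl in *. field; lra. Qed.

Lemma Cmul_neq0 (a b : Cx) : a <> C0 -> b <> C0 -> Cmul a b <> C0.
Proof. intros Ha Hb E. pose proof (Cnorm2_pos a Ha). pose proof (Cnorm2_pos b Hb).
  assert (Cnorm2 (Cmul a b) = 0) by (rewrite E; apply Cnorm2_C0).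
  rewrite Cnorm2_mul in H1. nra. Qed.

Definition vadd {J} (x y : vec J) : vec J := fun j k => Cadd (x j k) (y j k).
Definition vscal {J} (a : Cx) (x : vec J) : vec J := fun j k => Cmul a (x j k).
Definition vzero {J} : vec J := fun _ _ => C0.

Lemma Bop_add {J} w (x y : vec J) : Bop w (vadd x y) = vadd (Bop w x) (Bop w y).
Proof. extensionality j; extensionality k. unfold Bop, vadd. cx. Qed.
Lemma Bop_scal {J} w a (x : vec J) : Bop w (vscal a x) = vscal a (Bop w x).
Proof. extensionality j; extensionality k. unfold Bop, vscal. cx. Qed.
Lemma Bop_zero {J} w : Bop w (@vzero J) = vzero.
Proof. extensionality j; extensionality k. unfold Bop, vzero. cx. Qed.

Fixpoint addl (l1 l2 : list Cx) : list Cx :=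
  match l1, l2 with
  | nil, _ => l2
  | _, nil => l1
  | a :: l1', b :: l2' => Cadd a b :: addl l1' l2'
  end.

Lemma polyB_nil {J} w (h : vec J) : polyB w nil h = vzero.
Proof. reflexivity. Qed.

Lemma polyB_add {J} w (h : vec J) cs1 : forall cs2,
  polyB w (addl cs1 cs2) h = vadd (polyB w cs1 h) (polyB w cs2 h).
Proof.
  induction cs1 as [|a cs1 IH]; intros [|b cs2]; simpl.
  - extensionality j; extensionality k; unfold vadd; cx.
  - extensionality j; extensionality k; unfold vadd; cx.
  - extensionality j; extensionality k; unfold vadd; cx.
  - rewrite IH. extensionality j; extensionality k. rewrite Bop_add. unfold vadd. cx.
Qed.

Lemma polyB_scal {J} w (h : vec J) a cs :
  polyB w (map (Cmul a) cs) h = vscal a (polyB w cs h).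
Proof.
  induction cs as [|c cs IH]; simpl.
  - extensionality j; extensionality k; unfold vscal; cx.
  - rewrite IH, Bop_scal. extensionality j; extensionality k; unfold vscal; cx.
Qed.

Lemma polyB_mono {J} w (h : vec J) c n :
  polyB w (repeat C0 n ++ c :: nil) h = vscal c (Nat.iter n (Bop w) h).
Proof.
  induction n as [|n IH]; simpl.
  - extensionality j; extensionality k. unfold Bop, vscal; cx.
  - rewrite IH. extensionality j; extensionality k. rewrite Bop_scal. unfold vscal; cx.
Qed.

Fixpoint Wc {J} (w : J -> nat -> Cx) (j : J) (k n : nat) : Cx :=
  match n with
  | O => (1, 0)
  | S n' => Cmul (w j k) (Wc w j (S k) n')
  end.

Lemma iter_Bop {J} w n : forall (x : vec J) j k,
  Nat.iter n (Bop w) x j k = Cmul (Wc w j k n) (x j (k + n)%nat).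
Proof.
  induction n as [|n IH]; intros x j k; simpl.
  - rewrite Nat.add_0_r. cx.
  - unfold Bop at 1. rewrite IH. replace (S k + n)%nat with (k + S n)%nat by lia. cx.
Qed.

Lemma psum_cons {J} (x : vec J) p L : psum x (p :: L) = Cnorm2 (x (fst p) (snd p)) + psum x L.
Proof. reflexivity. Qed.

Lemma psum_nonneg {J} (x : vec J) L : 0 <= psum x L.
Proof. induction L. unfold psum; simpl; lra. rewrite psum_cons. pose proof (Cnorm2_nonneg (x (fst a) (snd a))). lra. Qed.

Lemma psum_app {J} (x : vec J) L1 L2 : psum x (L1 ++ L2) = psum x L1 + psum x L2.
Proof. induction L1; simpl. unfold psum; simpl; lra. rewrite !psum_cons, IHL1. lra. Qed.

Lemma psum_le {J} (x : vec J) (y z : vec J) a b L :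
  (forall j k, Cnorm2 (x j k) <= a * Cnorm2 (y j k) + b * Cnorm2 (z j k)) ->
  psum x L <= a * psum y L + b * psum z L.
Proof. intro H. induction L; simpl. unfold psum; simpl; lra.
  rewrite !psum_cons. specialize (H (fst a0) (snd a0)). lra. Qed.

Lemma norm2_le_add {J} (x z : vec J) a b :
  norm2_le x a -> norm2_le z b -> norm2_le (vadd x z) (2 * a + 2 * b).
Proof. intros Hx Hz L HL. specialize (Hx L HL); specialize (Hz L HL).
  pose proof (psum_le (vadd x z) x z 2 2 L (fun j k => Cnorm2_add _ _)). lra. Qed.

Lemma norm2_le_scal {J} (x : vec J) c a :
  norm2_le x a -> norm2_le (vscal c x) (Cnorm2 c * a).
Proof. intros Hx L HL. specialize (Hx L HL).
  pose proof (psum_le (vscal c x) x x (Cnorm2 c) 0 L) as P.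
  assert (Cnorm2 c * psum x L <= Cnorm2 c * a) by (apply Rmult_le_compat_l; auto; apply Cnorm2_nonneg).
  enough (psum (vscal c x) L <= Cnorm2 c * psum x L + 0 * psum x L) by lra.
  apply P. intros j k. unfold vscal. rewrite Cnorm2_mul. lra. Qed.

Lemma norm2_le_mono {J} (x : vec J) a b : a <= b -> norm2_le x a -> norm2_le x b.
Proof. intros H Hx L HL. specialize (Hx L HL). lra. Qed.

Lemma norm2_le_zero {J} (e : R) : 0 <= e -> norm2_le (@vzero J) e.
Proof. intros He L _. induction L. unfold psum; simpl; lra.
  rewrite psum_cons. replace (Cnorm2 _) with 0 by (unfold vzero; rewrite Cnorm2_C0; reflexivity). lra. Qed.

Definition approx {J} (w : J -> nat -> Cx) (h y : vec J) : Prop :=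
  forall eps, 0 < eps -> exists cs, norm2_le (vsub y (polyB w cs h)) eps.

Lemma approx_poly {J} w (h : vec J) cs : approx w h (polyB w cs h).
Proof. intros eps He. exists cs. replace (vsub _ _) with (@vzero J).
  apply norm2_le_zero; lra. extensionality j; extensionality k. unfold vsub, vzero. cx. Qed.

Lemma approx_add {J} w (h y1 y2 : vec J) :
  approx w h y1 -> approx w h y2 -> approx w h (vadd y1 y2).
Proof. intros H1 H2 eps He. destruct (H1 (eps/4)) as [cs1 P1]. lra.
  destruct (H2 (eps/4)) as [cs2 P2]. lra. exists (addl cs1 cs2).
  rewrite polyB_add. replace (vsub _ _) with (vadd (vsub y1 (polyB w cs1 h)) (vsub y2 (polyB w cs2 h))).
  eapply norm2_le_mono; [|apply norm2_le_add; eauto]. lra.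
  extensionality j; extensionality k. unfold vsub, vadd. cx. Qed.

Lemma approx_scal {J} w (h y : vec J) c : approx w h y -> approx w h (vscal c y).
Proof. intros H eps He. pose proof (Cnorm2_nonneg c).
  destruct (H (eps / (Cnorm2 c + 1))) as [cs P]. apply Rdiv_lt_0_compat; lra.
  exists (map (Cmul c) cs). rewrite polyB_scal.
  replace (vsub _ _) with (vscal c (vsub y (polyB w cs h))).
  eapply norm2_le_mono; [|apply norm2_le_scal; eauto].
  apply Rle_trans with ((Cnorm2 c + 1) * (eps / (Cnorm2 c + 1))).
  apply Rmult_le_compat_r. apply Rlt_le, Rdiv_lt_0_compat; lra. lra. right; field; lra.
  extensionality j; extensionality k. unfold vsub, vscal. cx. Qed.

Lemma approx_sub {J} w (h y1 y2 : vec J) :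
  approx w h y1 -> approx w h y2 -> approx w h (vsub y1 y2).
Proof. intros H1 H2. replace (vsub y1 y2) with (vadd y1 (vscal (-1, 0) y2)).
  apply approx_add; auto; apply approx_scal; auto.
  extensionality j; extensionality k. unfold vsub, vadd, vscal. cx. Qed.

Definition ebas {J} (p : J * nat) : vec J :=
  fun j k => if emi ((j, k) = p) then (1, 0) else C0.

Definition upd {J} (z : vec J) (p : J * nat) (a : Cx) : vec J :=
  fun j k => if emi ((j, k) = p) then a else z j k.

Definition restr {J} (y : vec J) (L : list (J * nat)) : vec J :=
  fold_right (fun p z => upd z p (y (fst p) (snd p))) vzero L.

Lemma restr_spec {J} (y : vec J) L j k :
  restr y L j k = if emi (In (j, k) L) then y j k else C0.
Proof. induction L as [|p L IH]; simpl.
  - destruct (emi False); [contradiction|reflexivity].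
  - unfold upd. destruct (emi ((j,k) = p)) as [E|E].
    + subst p. simpl. destruct (emi ((j, k) = (j, k) \/ In (j, k) L)) as [_|N]; auto. exfalso; apply N; auto.
    + rewrite IH. destruct (emi (In (j,k) L)) as [I|I]; destruct (emi (p = (j,k) \/ In (j,k) L)) as [I'|I'].
      * reflexivity.
      * exfalso; apply I'; auto.
      * exfalso. destruct I' as [I'|I']; [apply E; auto | contradiction].
      * reflexivity.
Qed.

Lemma approx_restr {J} w (h y : vec J) (S : J * nat -> Prop) L :
  (forall p, S p -> approx w h (ebas p)) -> (forall j k, ~ S (j, k) -> y j k = C0) ->
  approx w h (restr y L).
Proof. intros HS Hy. induction L as [|p L IH]; simpl.
  - replace (@vzero J) with (polyB w nil h) by reflexivity. apply approx_poly.
  - destruct (emi (S p)) as [Sp|Sp].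
    + replace (upd _ _ _) with (vadd (restr y L) (vscal (Csub (y (fst p) (snd p)) (restr y L (fst p) (snd p))) (ebas p))).
      apply approx_add; auto; apply approx_scal; auto.
      extensionality j; extensionality k. unfold vadd, vscal, upd, ebas.
      destruct (emi ((j,k) = p)) as [E|E]. subst p; simpl. cx. cx.
    + replace (upd _ _ _) with (restr y L); auto.
      extensionality j; extensionality k. unfold upd.
      destruct (emi ((j,k) = p)) as [E|E]; auto. subst p; simpl.
      rewrite restr_spec. rewrite Hy by auto. destruct (emi _); auto.
Qed.

Lemma psum_vsub_restr {J} (y : vec J) L L' :
  psum (vsub y (restr y L)) L' = psum y (filter (fun p => if emi (In p L) then false else true) L').
Proof. induction L' as [|p L' IH]; simpl. reflexivity.
  destruct p as [j k]. rewrite psum_cons. unfold vsub at 1. simpl. rewrite restr_spec.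
  destruct (emi (In (j,k) L)).
  - rewrite IH. replace (Cnorm2 _) with 0. lra. unfold vsub, Csub, Cnorm2; simpl; ring.
  - rewrite psum_cons, IH. simpl. f_equal. unfold vsub, Csub, C0, Cnorm2; simpl. ring.
Qed.

Lemma l2_tail {J} (y : vec J) : in_l2 y -> forall eps, 0 < eps ->
  exists L, NoDup L /\ norm2_le (vsub y (restr y L)) eps.
Proof.
  intros [M HM] eps He.
  set (E := fun r => exists L, NoDup L /\ r = psum y L).
  destruct (completeness E) as [s [Hub Hlub]].
  - exists M. intros r [L [HL ->]]. auto.
  - exists 0, nil. split. constructor. reflexivity.
  - assert (exists L, NoDup L /\ s - eps < psum y L) as [L [HL HLs]].
    { apply NNPP. intro N. assert (is_upper_bound E (s - eps)).
      { intros r [L [HL ->]]. apply Rnot_lt_le. intro. apply N. exists L; auto. }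
      specialize (Hlub _ H). lra. }
    exists L; split; auto. intros L' HL'. rewrite psum_vsub_restr.
    set (F := filter _ L').
    assert (NoDup (L ++ F)).
    { apply NoDup_app; auto. apply NoDup_filter; auto.
      intros a Ia IF. unfold F in IF. apply filter_In in IF as [_ IF].
      destruct (emi (In a L)); try discriminate; contradiction. }
    assert (E (psum y (L ++ F))) by (exists (L ++ F); auto).
    specialize (Hub _ H0). rewrite psum_app in Hub. lra.
Qed.

Lemma approx_l2 {J} w (h y : vec J) (S : J * nat -> Prop) :
  (forall p, S p -> approx w h (ebas p)) -> (forall j k, ~ S (j, k) -> y j k = C0) ->
  in_l2 y -> approx w h y.
Proof. intros HS Hy Hl eps He.
  destruct (l2_tail y Hl (eps/4)) as [L [HL P1]]. lra.
  destruct (approx_restr w h y S L HS Hy (eps/4)) as [cs P2]. lra.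
  exists cs. replace (vsub y (polyB w cs h)) with (vadd (vsub y (restr y L)) (vsub (restr y L) (polyB w cs h))).
  eapply norm2_le_mono; [|apply norm2_le_add; eauto]. lra.
  extensionality j; extensionality k. unfold vsub, vadd. cx. Qed.

Fixpoint sumup (b : nat -> R) (K : nat) : R :=
  match K with O => 0 | S K' => sumup b K' + b K' end.

Definition sumR (l : list R) : R := fold_right Rplus 0 l.

Lemma sumR_app l1 l2 : sumR (l1 ++ l2) = sumR l1 + sumR l2.
Proof. induction l1; simpl. unfold sumR; simpl; lra. unfold sumR in *; simpl. rewrite IHl1. lra. Qed.

Lemma sumup_mono b K1 K2 : (forall t, 0 <= b t) -> (K1 <= K2)%nat -> sumup b K1 <= sumup b K2.
Proof. intros Hb H. induction H. lra. simpl. specialize (Hb m). lra. Qed.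

Lemma nat_list_sum (b : nat -> R) : (forall t, 0 <= b t) -> forall K l, NoDup l ->
  (forall x, In x l -> (x < K)%nat) -> sumR (map b l) <= sumup b K.
Proof. intros Hb K. induction K as [|K IH]; intros l Hl Hlt.
  - destruct l as [|x l]. simpl. unfold sumR; simpl; lra. specialize (Hlt x (or_introl eq_refl)). lia.
  - simpl. destruct (in_dec Nat.eq_dec K l) as [I|I].
    + apply in_split in I as [l1 [l2 ->]].
      pose proof (NoDup_remove_1 _ _ _ Hl). pose proof (NoDup_remove_2 _ _ _ Hl).
      rewrite map_app, sumR_app. simpl. unfold sumR at 2; simpl.
      assert (sumR (map b (l1 ++ l2)) <= sumup b K).
      { apply IH; auto. intros x Ix. assert (x <> K) by (intro; subst; contradiction).
        assert (In x (l1 ++ K :: l2)) by (apply in_app_or in Ix; apply in_or_app; destruct Ix; auto; right; right; auto).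
        specialize (Hlt x H2). lia. }
      rewrite map_app, sumR_app in H1. fold (sumR (map b l2)). lra.
    + assert (sumR (map b l) <= sumup b K).
      { apply IH; auto. intros x Ix. assert (x <> K) by (intro; subst; contradiction). specialize (Hlt x Ix). lia. }
      specialize (Hb K). lra.
Qed.

Lemma nat_list_bound (l : list nat) : exists K, forall x, In x l -> (x < K)%nat.
Proof. induction l as [|a l [K HK]]. exists O; intros x []. exists (S (Nat.max a K)).
  intros x [->|I]. lia. specialize (HK x I). lia. Qed.

Lemma sparse_l2 {J} (v : vec J) (pi : nat -> J * nat) (b : nat -> R) (S : R) :
  (forall t, 0 <= b t) -> (forall K, sumup b K <= S) ->
  (forall t1 t2, pi t1 = pi t2 -> t1 = t2) ->
  (forall j k, v j k <> C0 -> exists t, pi t = (j, k) /\ Cnorm2 (v j k) <= b t) ->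
  norm2_le v S.
Proof. intros Hb HS Hpi Hv.
  assert (forall L, NoDup L -> exists l, NoDup l /\ (forall t, In t l -> In (pi t) L) /\ psum v L <= sumR (map b l)) as Aux.
  { induction L as [|p L IH]; intros HL.
    - exists nil. repeat split; auto. constructor. unfold psum, sumR; simpl; lra.
    - inversion HL; subst. destruct (IH H2) as [l [Hl [Hin Hs]]]. destruct p as [j k].
      destruct (emi (v j k = C0)) as [Z|Z].
      + exists l. repeat split; auto. intros t It; right; auto. rewrite psum_cons; simpl. rewrite Z, Cnorm2_C0. lra.
      + destruct (Hv j k Z) as [t [Et Bt]]. exists (t :: l). repeat split.
        * constructor; auto. intro It. apply H1. rewrite <- Et. auto.
        * intros t' [<-|It']. left; auto. right; auto.
        * rewrite psum_cons; simpl. unfold sumR; simpl. fold (sumR (map b l)). lra. }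
  intros L HL. destruct (Aux L HL) as [l [Hl [_ Hs]]]. destruct (nat_list_bound l) as [K HK].
  pose proof (nat_list_sum b Hb K l Hl HK). specialize (HS K). lra.
Qed.

Lemma sumup_geom (c : R) (b : nat -> R) : 0 <= c -> (forall t, 0 <= b t) ->
  (forall t, b t <= c * (/2) ^ t) -> forall K, sumup b K <= 2 * c.
Proof. intros Hc Hb H K. assert (forall K, sumup b K <= 2 * c - 2 * c * (/2)^K).
  { induction K0; simpl. lra. specialize (H K0). nra. }
  specialize (H0 K). assert (0 <= (/2)^K) by (apply pow_le; lra). nra. Qed.

Fixpoint prodR (f : nat -> R) (a n : nat) : R :=
  match n with O => 1 | S n' => f a * prodR f (S a) n' end.

Lemma prodR_split f n1 : forall a n2, prodR f a (n1 + n2) = prodR f a n1 * prodR f (a + n1) n2.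
Proof. induction n1; intros a n2; simpl. rewrite Nat.add_0_r; lra.
  rewrite IHn1. replace (S a + n1)%nat with (a + S n1)%nat by lia. lra. Qed.

Lemma prodR_bounds f : (forall i, 0 < f i <= 1) -> forall n a, 0 < prodR f a n <= 1.
Proof. intros Hf n; induction n; intros a; simpl. lra.
  specialize (Hf a); specialize (IHn (S a)). split; nra. Qed.


Lemma pow_half_bounds n : 0 < (/2)^n <= 1.
Proof. induction n; simpl; lra. Qed.

Lemma Cmul_comm (a b : Cx) : Cmul a b = Cmul b a.
Proof. cx. Qed.
Lemma Cnorm2_Csub0 (x : Cx) : Cnorm2 (Csub C0 x) = Cnorm2 x.
Proof. unfold Cnorm2, Csub, C0; simpl; ring. Qed.
Lemma Cnorm2_Csubr0 (x : Cx) : Csub x C0 = x.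
Proof. cx. Qed.

Lemma div_le x y A : 0 < A -> x <= y * A -> x / A <= y.
Proof. intros HA H. unfold Rdiv. replace y with (y * A * / A) by (field; lra).
  apply Rmult_le_compat_r; auto. apply Rlt_le, Rinv_0_lt_compat; auto. Qed.

Lemma sumup_tail (b : nat -> R) n : (forall t, 0 <= b t) -> (forall t, (n <= t)%nat -> b t <= (/2)^t) ->
  forall K, sumup b K <= sumup b n + 2.
Proof. intros Hb H K. destruct (Nat.le_gt_cases K n).
  - pose proof (sumup_mono b K n Hb H0). lra.
  - assert (forall d, sumup b (n + d) <= sumup b n + 2 * (/2)^n - 2 * (/2)^(n+d)).
    { induction d. rewrite Nat.add_0_r. lra. replace (n + S d)%nat with (S (n + d)) by lia. simpl sumup.
      specialize (H (n + d)%nat ltac:(lia)). replace ((/2)^(S (n+d))) with (/2 * (/2)^(n+d)) by reflexivity. lra. }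
    replace K with (n + (K - n))%nat by lia. specialize (H1 (K - n)%nat).
    pose proof (pow_half_bounds n). pose proof (pow_half_bounds (n + (K - n))). lra.
Qed.

Lemma Bop_l2 {J} (w : J -> nat -> Cx) (Mw : R) (x : vec J) : (forall j k, Cnorm2 (w j k) <= Mw) -> 0 <= Mw ->
  in_l2 x -> in_l2 (Bop w x).
Proof. intros Hw HMw [Mx HMx]. exists (Mw * Mx). intros L HL.
  assert (psum (Bop w x) L <= Mw * psum x (map (fun p => (fst p, S (snd p))) L)).
  { induction L as [|p L IH]. unfold psum; simpl; nra. simpl map. rewrite !psum_cons. inversion HL; subst.
    specialize (IH H2). simpl.
    assert (Cnorm2 (Bop w x (fst p) (snd p)) = Cnorm2 (w (fst p) (snd p)) * Cnorm2 (x (fst p) (S (snd p)))) by (unfold Bop; apply Cnorm2_mul).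
    rewrite H. pose proof (Hw (fst p) (snd p)).
    pose proof (Cnorm2_nonneg (w (fst p) (snd p))). pose proof (Cnorm2_nonneg (x (fst p) (S (snd p)))). nra. }
  assert (NoDup (map (fun p => (fst p, S (snd p))) L)).
  { apply NoDup_map_NoDup_ForallPairs; auto. intros [a b] [c d] _ _ E. simpl in E. inversion E; subst; auto. }
  specialize (HMx _ H0). nra.
Qed.

Lemma iter_l2 {J} (w : J -> nat -> Cx) (Mw : R) (x : vec J) n : (forall j k, Cnorm2 (w j k) <= Mw) -> 0 <= Mw ->
  in_l2 x -> in_l2 (Nat.iter n (Bop w) x).
Proof. intros. induction n; simpl; auto. eapply Bop_l2; eauto. Qed.

Lemma l2_add {J} (x y : vec J) : in_l2 x -> in_l2 y -> in_l2 (vadd x y).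
Proof. intros [a Ha] [b Hb]. exists (2 * a + 2 * b). apply norm2_le_add; auto. Qed.
Section Construction.
Variable J : Type.
Variable enc : J -> nat.
Hypothesis enc_inj : forall a b : J, enc a = enc b -> a = b.
Variable j0 : J.
Variable w : J -> nat -> Cx.
Variable M : R.
Hypothesis HM : forall j k, Cnorm2 (w j k) <= M.
Variable jz : J.
Variable K0 : nat.
Hypothesis Hz : forall j i, w j i = C0 -> j = jz /\ S i = K0.

Definition Lam := Rmax 1 M.
Lemma Lam_ge1 : 1 <= Lam. Proof. apply Rmax_l. Qed.
Lemma w_le_Lam j k : Cnorm2 (w j k) <= Lam.
Proof. eapply Rle_trans; [apply HM|apply Rmax_r]. Qed.

Definition nu (j : J) (i : nat) : R :=
  if emi (w j i = C0) then 1 else Rmin (Cnorm2 (w j i)) 1.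

Lemma nu_bounds j i : 0 < nu j i <= 1.
Proof. unfold nu. destruct (emi _). lra. pose proof (Cnorm2_pos _ n).
  unfold Rmin; destruct (Rle_dec _ _); lra. Qed.

Definition Lw (j : J) (N : nat) : R := prodR (nu j) 0 N.

Lemma Lw_bounds j N : 0 < Lw j N <= 1.
Proof. apply prodR_bounds, nu_bounds. Qed.

Lemma prodR_ge_Lw j a n : Lw j (a + n) <= prodR (nu j) a n.
Proof. unfold Lw. rewrite prodR_split. simpl.
  pose proof (prodR_bounds _ (nu_bounds j) a 0). pose proof (prodR_bounds _ (nu_bounds j) n a). nra. Qed.

Lemma Lw_anti j N1 N2 : (N1 <= N2)%nat -> Lw j N2 <= Lw j N1.
Proof. intro H. replace N2 with (N1 + (N2 - N1))%nat by lia. unfold Lw. rewrite prodR_split.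
  pose proof (prodR_bounds _ (nu_bounds j) N1 0). pose proof (prodR_bounds _ (nu_bounds j) (N2 - N1) (0+N1)).
  nra. Qed.

Lemma Wc_lower j n : forall a, (forall i, (a <= i < a + n)%nat -> w j i <> C0) ->
  prodR (nu j) a n <= Cnorm2 (Wc w j a n).
Proof. induction n; intros a H; simpl. unfold Cnorm2; simpl; lra.
  rewrite Cnorm2_mul. assert (nu j a <= Cnorm2 (w j a)).
  { unfold nu. destruct (emi _). exfalso; apply (H a); auto; lia. apply Rmin_l. }
  assert (prodR (nu j) (S a) n <= Cnorm2 (Wc w j (S a) n)) by (apply IHn; intros; apply H; lia).
  pose proof (nu_bounds j a). pose proof (prodR_bounds _ (nu_bounds j) n (S a)). nra. Qed.

Lemma Wc_upper j n : forall a, Cnorm2 (Wc w j a n) <= Lam ^ n.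
Proof. induction n; intros a; simpl. unfold Cnorm2; simpl; lra. rewrite Cnorm2_mul.
  pose proof (w_le_Lam j a). pose proof (Cnorm2_nonneg (w j a)). pose proof (Cnorm2_nonneg (Wc w j (S a) n)).
  specialize (IHn (S a)). nra. Qed.

Lemma Wc_nonzero j n : forall a, (forall i, (a <= i < a + n)%nat -> w j i <> C0) -> Wc w j a n <> C0.
Proof. induction n; intros a H; simpl. unfold C0; intro E; inversion E; lra.
  apply Cmul_neq0. apply H; lia. apply IHn; intros; apply H; lia. Qed.

Lemma Wc_zero j n : forall a i, (a <= i < a + n)%nat -> w j i = C0 -> Wc w j a n = C0.
Proof. induction n; intros a i Hi Hw. lia. simpl. destruct (Nat.eq_dec a i).
  subst. rewrite Hw. cx. rewrite (IHn (S a) i); [cx|lia|auto]. Qed.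

Fixpoint Nseq (m : nat) : nat := match m with O => K0 | S m' => (Nseq m' + S m')%nat end.

Lemma Nseq_ge m : (K0 + m <= Nseq m)%nat.
Proof. induction m; simpl; lia. Qed.

Lemma Nseq_lt m1 m2 : (m1 < m2)%nat -> (Nseq m1 + m2 <= Nseq m2)%nat.
Proof. induction m2; intro H. lia. simpl. destruct (Nat.eq_dec m1 m2). subst; lia.
  assert (Nseq m1 + m2 <= Nseq m2)%nat by (apply IHm2; lia). lia. Qed.

Lemma Nseq_mono m1 m2 : (m1 <= m2)%nat -> (Nseq m1 <= Nseq m2)%nat.
Proof. intro H. destruct (Nat.eq_dec m1 m2). subst; lia. pose proof (Nseq_lt m1 m2). lia. Qed.

Lemma Nseq_inj m1 m2 : Nseq m1 = Nseq m2 -> m1 = m2.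
Proof. intro E. destruct (Nat.lt_total m1 m2) as [H|[H|H]]; auto.
  pose proof (Nseq_lt _ _ H); lia. pose proof (Nseq_lt _ _ H); lia. Qed.

Definition dec (a : nat) : J :=
  match emi (exists j, enc j = a) with
  | left H => proj1_sig (constructive_indefinite_description _ H)
  | right _ => j0 end.

Lemma dec_enc j : dec (enc j) = j.
Proof. unfold dec. destruct (emi _) as [H|H]. destruct (constructive_indefinite_description _ H); simpl; auto.
  exfalso; apply H; eauto. Qed.

Definition jj (m : nat) : J := dec (m - Nat.sqrt m * Nat.sqrt m).

Lemma jj_often j B0 : exists m, (B0 <= m)%nat /\ jj m = j.
Proof. set (b := (enc j + B0 + 1)%nat). exists (b * b + enc j)%nat. split. nia.
  unfold jj. rewrite (Nat.sqrt_unique (b * b + enc j) b) by (unfold b; nia).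
  replace (b * b + enc j - b * b)%nat with (enc j) by lia. apply dec_enc. Qed.

Fixpoint dd (m : nat) : R :=
  match m with
  | O => Lw (jj 0) (Nseq 0)
  | S m' => dd m' * (/2) ^ (S m') * Lw (jj m') (Nseq m') / Lam ^ (Nseq m')
            * Lw (jj (S m')) (Nseq (S m') + S m')
  end.



Lemma Lam_pow_ge1 n : 1 <= Lam ^ n.
Proof. pose proof Lam_ge1. induction n; simpl; nra. Qed.

Lemma div_ge1 X L : 0 <= X -> 1 <= L -> X / L <= X.
Proof. intros HX HL. apply Rmult_le_reg_r with L; [lra|]. unfold Rdiv.
  rewrite Rmult_assoc, Rinv_l, Rmult_1_r by lra. nra. Qed.

Lemma dd_bounds m : 0 < dd m <= (/2)^m * Lw (jj m) (Nseq m + m).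
Proof. induction m; simpl.
  - rewrite Nat.add_0_r. pose proof (Lw_bounds (jj 0) K0). lra.
  - destruct IHm as [IH1 IH2]. pose proof (pow_half_bounds m). pose proof (Lw_bounds (jj m) (Nseq m)).
    pose proof (Lw_bounds (jj (S m)) (Nseq m + S m + S m)). pose proof (Lw_bounds (jj m) (Nseq m + m)).
    pose proof (Lam_pow_ge1 (Nseq m)).
    set (a := dd m) in *. set (q := (/2)^m) in *. set (l1 := Lw (jj m) (Nseq m)) in *.
    set (l2 := Lw (jj (S m)) _) in *. set (L := Lam ^ Nseq m) in *.
    assert (0 < a * (/ 2 * q) * l1 / L) by (apply Rdiv_lt_0_compat; [|lra]; apply Rmult_lt_0_compat; nra).
    split. nra.
    assert (a * (/2 * q) * l1 / L <= /2 * q).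
    { assert (0 < /2*q) by lra. assert (0 < a * (/2 * q)) by (apply Rmult_lt_0_compat; lra).
      assert (0 < a * (/2 * q) * l1) by (apply Rmult_lt_0_compat; lra).
      eapply Rle_trans. apply div_ge1. lra. lra.
      assert (a <= 1) by nra. assert (a * l1 <= 1) by nra.
      replace (a * (/2 * q) * l1) with ((a * l1) * (/2 * q)) by ring. nra. }
    nra.
Qed.

Lemma dd_pos m : 0 < dd m. Proof. apply dd_bounds. Qed.

Lemma dd_step m : dd (S m) <= dd m * (/2)^(S m) * Lw (jj m) (Nseq m) / Lam ^ (Nseq m).
Proof. simpl dd at 1. pose proof (Lw_bounds (jj (S m)) (Nseq m + S m + S m)).
  assert (0 < dd m * (/2)^(S m) * Lw (jj m) (Nseq m) / Lam ^ (Nseq m)).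
  { apply Rdiv_lt_0_compat. pose proof (dd_pos m). pose proof (pow_half_bounds (S m)).
    pose proof (Lw_bounds (jj m) (Nseq m)). apply Rmult_lt_0_compat; [apply Rmult_lt_0_compat|]; lra.
    pose proof (Lam_pow_ge1 (Nseq m)). lra. }
  simpl pow in *. nra. Qed.

Lemma dd_half m : dd (S m) <= dd m / 2.
Proof. eapply Rle_trans; [apply dd_step|]. pose proof (dd_pos m). pose proof (pow_half_bounds m).
  pose proof (Lw_bounds (jj m) (Nseq m)). pose proof (Lam_pow_ge1 (Nseq m)).
  set (a := dd m) in *. set (q := (/2)^m) in *. set (l1 := Lw (jj m) (Nseq m)) in *.
  pose proof (pow_half_bounds (S m)).
  assert (0 <= a * (/2)^(S m) * l1) by (apply Rmult_le_pos; [apply Rmult_le_pos|]; lra).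
  eapply Rle_trans. apply div_ge1; lra. simpl pow. fold q.
  assert (a * l1 <= a) by nra. assert (q * (a * l1) <= q * a) by nra.
  replace (a * (/2 * q) * l1) with (/2 * (q * (a * l1))) by ring. nra. Qed.

Lemma dd_tail m t : dd (S m + t) <= dd (S m) * (/2)^t.
Proof. induction t. rewrite Nat.add_0_r; simpl; lra.
  replace (S m + S t)%nat with (S (S m + t)) by lia. pose proof (dd_half (S m + t)). simpl pow. nra. Qed.

Definition hinf : vec J := fun j k =>
  match emi (exists m, jj m = j /\ Nseq m = k) with
  | left H => (sqrt (dd (proj1_sig (constructive_indefinite_description _ H))), 0)
  | right _ => C0 end.

Lemma hinf_at m : hinf (jj m) (Nseq m) = (sqrt (dd m), 0).
Proof. unfold hinf. destruct (emi _) as [H|H].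
  destruct (constructive_indefinite_description _ H) as [m' [E1 E]]; simpl. apply Nseq_inj in E. subst; auto.
  exfalso; apply H; eauto. Qed.

Lemma hinf_supp j k : hinf j k <> C0 -> exists m, jj m = j /\ Nseq m = k.
Proof. unfold hinf. destruct (emi _) as [H|H]; auto. intro N; exfalso; apply N; auto. Qed.

Lemma Cnorm2_sqrt d : 0 <= d -> Cnorm2 (sqrt d, 0) = d.
Proof. intro H. unfold Cnorm2; simpl. rewrite sqrt_sqrt; lra. Qed.

Lemma sqrt_neq0 d : 0 < d -> (sqrt d, 0) <> C0.
Proof. intros H E. unfold C0 in E. inversion E. pose proof (sqrt_lt_R0 d H). lra. Qed.

Lemma hinf_l2 : in_l2 hinf.
Proof. exists 2. apply (sparse_l2 hinf (fun m => (jj m, Nseq m)) dd 2).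
  - intro; apply Rlt_le, dd_pos.
  - intro K. replace 2 with (2 * 1) by lra. apply sumup_geom. lra. intro; apply Rlt_le, dd_pos.
    intro t. pose proof (dd_bounds t). pose proof (Lw_bounds (jj t) (Nseq t + t)). pose proof (pow_half_bounds t). nra.
  - intros t1 t2 E. inversion E. apply Nseq_inj; auto.
  - intros j k H. destruct (hinf_supp j k H) as [m [<- <-]]. exists m. split; auto.
    rewrite hinf_at, Cnorm2_sqrt. lra. apply Rlt_le, dd_pos.
Qed.

Hypothesis Hzero : K0 = 0%nat \/ w jz (pred K0) = C0.

Definition hx : vec J := match K0 with O => vzero | S K => ebas (jz, K) end.

Lemma hx_supp j k : hx j k <> C0 -> (k < K0)%nat.
Proof. unfold hx. destruct K0 as [|K]. unfold vzero; intro H; exfalso; auto.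
  unfold ebas. destruct (emi _) as [E|E]. inversion E; lia. intro H; exfalso; auto. Qed.

Definition hfull : vec J := vadd hinf hx.

Lemma hfull_far j k : (K0 <= k)%nat -> hfull j k = hinf j k.
Proof. intro H. unfold hfull, vadd. destruct (emi (hx j k = C0)) as [Z|Z].
  rewrite Z; cx. apply hx_supp in Z; lia. Qed.

Lemma M_nonneg : 0 <= M.
Proof. eapply Rle_trans; [apply (Cnorm2_nonneg (w j0 0))|apply HM]. Qed.

Lemma off_F j k : ~ (j = jz /\ (k < K0)%nat) -> approx w hfull (ebas (j, k)).
Proof.
  intros HF eps He.
  destruct (pow_lt_1_zero (/2) ltac:(rewrite Rabs_pos_eq; lra) eps He) as [N0 HN0].
  destruct (jj_often j (Nat.max N0 (S k))) as [m [Hm Hjm]].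
  pose proof (Nseq_ge m) as HNm.
  set (n := (Nseq m - k)%nat).
  assert (Hkn : (k + n = Nseq m)%nat) by (unfold n; lia).
  set (W := Wc w j k n).
  assert (HWnz : forall i, (k <= i < k + n)%nat -> w j i <> C0).
  { intros i Hi E. destruct (Hz _ _ E) as [-> HS]. apply HF; split; auto; lia. }
  assert (HW : W <> C0) by (apply Wc_nonzero; auto).
  assert (HWlow : Lw j (Nseq m) <= Cnorm2 W).
  { eapply Rle_trans; [|apply Wc_lower; auto]. rewrite <- Hkn. apply prodR_ge_Lw. }
  pose proof (dd_pos m) as Hdm. pose proof (dd_pos (S m)) as HdSm.
  set (s := (sqrt (dd m), 0) : Cx).
  assert (Hs : s <> C0) by (apply sqrt_neq0; auto).
  assert (HCs : Cnorm2 s = dd m) by (apply Cnorm2_sqrt; lra).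
  set (c := Cinv (Cmul W s)).
  assert (HWs : Cmul W s <> C0) by (apply Cmul_neq0; auto).
  assert (Hc : Cnorm2 c = / (Cnorm2 W * dd m)) by (unfold c; rewrite Cnorm2_inv, Cnorm2_mul, HCs; auto).
  pose proof (Cnorm2_pos W HW) as HWp.
  exists (repeat C0 n ++ c :: nil). rewrite polyB_mono.
  set (C := Lam ^ n / (Cnorm2 W * dd m) * dd (S m)).
  assert (HC0 : 0 <= C).
  { unfold C. apply Rmult_le_pos; [|lra]. apply Rlt_le, Rdiv_lt_0_compat. pose proof (Lam_pow_ge1 n); lra. nra. }
  apply norm2_le_mono with (2 * C).
  {
    assert (C <= (/2)^(S m)).
    { pose proof (dd_step m) as St. pose proof (Lam_pow_ge1 n). pose proof (Lam_pow_ge1 (Nseq m)).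
      assert (Lam ^ n <= Lam ^ Nseq m) by (apply Rle_pow; [apply Lam_ge1|unfold n; lia]).
      pose proof (Lw_bounds j (Nseq m)). rewrite Hjm in St. pose proof (pow_half_bounds (S m)).
      unfold C. apply Rle_trans with (Lam ^ n / (Cnorm2 W * dd m) * (dd m * (/ 2) ^ S m * Lw j (Nseq m) / Lam ^ Nseq m)).
      apply Rmult_le_compat_l; auto. apply Rlt_le, Rdiv_lt_0_compat. lra. nra.
      replace (Lam ^ n / (Cnorm2 W * dd m) * (dd m * (/ 2) ^ S m * Lw j (Nseq m) / Lam ^ Nseq m))
        with ((Lam ^ n / Lam ^ Nseq m) * (Lw j (Nseq m) / Cnorm2 W) * (/2)^(S m)) by (field; lra).
      assert (Lam ^ n / Lam ^ Nseq m <= 1) by (apply div_le; lra).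
      assert (Lw j (Nseq m) / Cnorm2 W <= 1) by (apply div_le; lra).
      assert (0 <= Lam ^ n / Lam ^ Nseq m) by (apply Rlt_le, Rdiv_lt_0_compat; lra).
      assert (0 <= Lw j (Nseq m) / Cnorm2 W) by (apply Rlt_le, Rdiv_lt_0_compat; lra).
      assert ((Lam ^ n / Lam ^ Nseq m) * (Lw j (Nseq m) / Cnorm2 W) <= 1) by nra. nra. }
    specialize (HN0 m ltac:(lia)). rewrite Rabs_pos_eq in HN0 by (apply Rlt_le, pow_half_bounds).
    simpl pow in H. lra. }
  apply (sparse_l2 _ (fun t => (jj (S m + t), (Nseq (S m + t) - n)%nat)) (fun t => C * (/2)^t)).
  - intro t. pose proof (pow_half_bounds t). nra.
  - intro K. apply sumup_geom; auto. intro t. pose proof (pow_half_bounds t). nra. intro; lra.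
  - intros t1 t2 E. assert (E2 : (Nseq (S m + t1) - n = Nseq (S m + t2) - n)%nat) by exact (f_equal snd E). pose proof (Nseq_mono m (S m + t1) ltac:(lia)). pose proof (Nseq_mono m (S m + t2) ltac:(lia)).
    assert (EE : Nseq (S m + t1) = Nseq (S m + t2)) by (unfold n in *; lia). apply Nseq_inj in EE. lia.
  - intros j' k' Hv. unfold vsub, vscal in *. rewrite iter_Bop in *.
    assert (Hf : hfull j' (k' + n)%nat = hinf j' (k' + n)%nat) by (apply hfull_far; unfold n; lia).
    rewrite Hf in *.
    destruct (emi (hinf j' (k' + n)%nat = C0)) as [Z|Z].
    + exfalso. rewrite Z in Hv. unfold ebas in Hv. destruct (emi ((j', k') = (j, k))) as [E|E].
      * inversion E; subst j' k'. rewrite Hkn, <- Hjm, hinf_at in Z. apply Hs; auto.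
      * apply Hv. cx.
    + destruct (hinf_supp _ _ Z) as [m' [Hj' Hk']].
      destruct (Nat.lt_total m' m) as [Hlt|[Heq|Hgt]].
      * exfalso. pose proof (Nseq_lt _ _ Hlt). lia.
      * exfalso. subst m'. assert (k' = k) by lia. subst k'. rewrite Hjm in Hj'. subst j'.
        apply Hv. unfold ebas. destruct (emi ((j, k) = (j, k))) as [_|N]; [|exfalso; auto].
        rewrite Hkn, <- Hjm, hinf_at. fold s. rewrite Hjm. fold W.
        replace (Cmul c (Cmul W s)) with (Cmul (Cmul W s) c) by apply Cmul_comm. unfold c. rewrite Cmul_inv by auto. cx.
      * exists (m' - S m)%nat. replace (S m + (m' - S m))%nat with m' by lia. split.
        { rewrite Hj', Hk'. f_equal. lia. }
        assert (Hne : (j', k') <> (j, k)).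
        { intro E; inversion E; subst. pose proof (Nseq_lt _ _ Hgt). lia. }
        unfold ebas. destruct (emi ((j', k') = (j, k))) as [E|_]; [exfalso; auto|].
        rewrite Cnorm2_Csub0, !Cnorm2_mul, Hc. rewrite <- Hj', <- Hk', hinf_at, Cnorm2_sqrt by (apply Rlt_le, dd_pos).
        pose proof (Wc_upper (jj m') n k') as HU.
        pose proof (dd_tail m (m' - S m)) as HT. replace (S m + (m' - S m))%nat with m' in HT by lia.
        unfold C. pose proof (Cnorm2_nonneg (Wc w (jj m') k' n)).
        pose proof (dd_pos m'). assert (0 < / (Cnorm2 W * dd m)) by (apply Rinv_0_lt_compat; nra).
        unfold Rdiv. pose proof (pow_half_bounds (m' - S m)).
        apply Rle_trans with (/ (Cnorm2 W * dd m) * (Lam ^ n * (dd (S m) * (/ 2) ^ (m' - S m)))).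
        { apply Rmult_le_compat_l. lra. apply Rmult_le_compat; try lra. }
        right. ring.
Qed.


Lemma hx_l2 : in_l2 hx.
Proof. exists 2. apply (sparse_l2 hx (fun t => (jz, (pred K0 + t)%nat)) (fun t => if Nat.eq_dec t 0 then 1 else 0) 2).
  - intro t; destruct (Nat.eq_dec t 0); lra.
  - intro K. replace 2 with (2 * 1) by lra. apply sumup_geom. lra. intro t; destruct (Nat.eq_dec t 0); lra.
    intro t; destruct (Nat.eq_dec t 0). subst; simpl; lra. pose proof (pow_half_bounds t); lra.
  - intros t1 t2 E. assert (E2 : (pred K0 + t1 = pred K0 + t2)%nat) by exact (f_equal snd E). lia.
  - intros j k H. exists O. unfold hx in *. destruct K0 as [|K]. exfalso; apply H; reflexivity.
    unfold ebas in *. destruct (emi ((j, k) = (jz, K))) as [E|E]; [|exfalso; auto].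
    simpl. rewrite Nat.add_0_r. split; auto. unfold Cnorm2; simpl; lra.
Qed.

Lemma hfull_l2 : in_l2 hfull.
Proof. apply l2_add. apply hinf_l2. apply hx_l2. Qed.

Lemma in_F k : (k < K0)%nat -> approx w hfull (ebas (jz, k)).
Proof.
  intro Hk. destruct Hzero as [E0|Hw0]. lia.
  set (K := pred K0). assert (HK : K0 = S K) by (unfold K; lia).
  set (n := (K - k)%nat).
  set (W := Wc w jz k n).
  assert (HW : W <> C0).
  { apply Wc_nonzero. intros i Hi E. destruct (Hz _ _ E). unfold n in Hi. lia. }
  set (y1 := Nat.iter n (Bop w) hfull). set (y2 := Nat.iter n (Bop w) hinf).
  assert (A1 : approx w hfull y1).
  { replace y1 with (polyB w (repeat C0 n ++ (1, 0) :: nil) hfull). apply approx_poly.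
    rewrite polyB_mono. extensionality a; extensionality b. unfold vscal, y1. cx. }
  assert (A2 : approx w hfull y2).
  { apply (approx_l2 w hfull y2 (fun p => ~ (fst p = jz /\ (snd p < K0)%nat))).
    - intros [a b] H. apply off_F. exact H.
    - intros a b H. simpl in H. apply NNPP in H as [-> Hb]. unfold y2. rewrite iter_Bop.
      destruct (Nat.le_gt_cases K0 (b + n)) as [Hle|Hlt].
      + rewrite (Wc_zero jz n b K). cx. lia. exact Hw0.
      + destruct (emi (hinf jz (b + n)%nat = C0)) as [Z|Z]. rewrite Z; cx.
        destruct (hinf_supp _ _ Z) as [m [_ Hm]]. pose proof (Nseq_ge m). lia.
    - apply (iter_l2 w M). apply HM. apply M_nonneg. apply hinf_l2. }
  replace (ebas (jz, k)) with (vscal (Cinv W) (vsub y1 y2)).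
  apply approx_scal, approx_sub; auto.
  extensionality a; extensionality b. unfold vscal, vsub, y1, y2. rewrite !iter_Bop.
  unfold hfull, vadd, hx. rewrite HK. unfold ebas.
  destruct (emi ((a, (b + n)%nat) = (jz, K))) as [E|E]; destruct (emi ((a, b) = (jz, k))) as [E'|E'].
  - inversion E'; subst a b. fold W.
    replace (Csub (Cmul W (Cadd (hinf jz (k + n)%nat) (1, 0))) (Cmul W (hinf jz (k + n)%nat))) with W by cx.
    rewrite Cmul_comm. apply Cmul_inv; auto.
  - exfalso. inversion E; subst. apply E'. f_equal. unfold n; lia.
  - exfalso. inversion E'; subst. apply E. f_equal. unfold n; lia.
  - cx.
Qed.

Lemma hfull_cyclic : cyclic_vector w hfull.
Proof. split. apply hfull_l2. intros y Hy eps He.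
  apply (approx_l2 w hfull y (fun _ => True)); auto.
  intros [a b] _. destruct (emi (a = jz /\ (b < K0)%nat)) as [[-> Hb]|N].
  apply in_F; auto. apply off_F; auto.
  intros a b H; exfalso; auto. Qed.

Lemma hfull_ran : K0 = 0%nat -> in_all_ran w hfull.
Proof. intros E0 n Hn.
  assert (Hnz : forall j i, w j i <> C0) by (intros j i E; destruct (Hz _ _ E); lia).
  set (x := fun j k => if Compare_dec.le_dec n k then Cmul (Cinv (Wc w j (k - n) n)) (hinf j (k - n)%nat) else C0).
  exists x. split.
  - set (b := fun t => dd t / Cnorm2 (Wc w (jj t) (Nseq t) n)).
    assert (Hb : forall t, 0 < Cnorm2 (Wc w (jj t) (Nseq t) n)).
    { intro t. apply Cnorm2_pos, Wc_nonzero. intros; auto. }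
    exists (sumup b n + 2). apply (sparse_l2 x (fun t => (jj t, (Nseq t + n)%nat)) b).
    + intro t. unfold b. apply Rlt_le, Rdiv_lt_0_compat; auto. apply dd_pos.
    + apply sumup_tail. intro t. unfold b. apply Rlt_le, Rdiv_lt_0_compat; auto. apply dd_pos.
      intros t Ht. unfold b. apply div_le; auto. pose proof (dd_bounds t) as [_ D].
      eapply Rle_trans; [apply D|]. apply Rmult_le_compat_l. apply Rlt_le, pow_half_bounds.
      eapply Rle_trans; [apply Lw_anti with (N1 := (Nseq t + n)%nat); lia|].
      eapply Rle_trans; [apply prodR_ge_Lw|]. apply Wc_lower. intros; auto.
    + intros t1 t2 E. assert (E2 : (Nseq t1 + n = Nseq t2 + n)%nat) by exact (f_equal snd E).
      apply Nseq_inj. lia.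
    + intros j k H. unfold x in *. destruct (Compare_dec.le_dec n k) as [Hle|Hle]; [|exfalso; auto].
      destruct (emi (hinf j (k - n)%nat = C0)) as [Z|Z]. exfalso; apply H; rewrite Z; cx.
      destruct (hinf_supp _ _ Z) as [m [Hj Hm]]. exists m. split. rewrite Hj, Hm. f_equal; lia.
      rewrite Cnorm2_mul, Cnorm2_inv. rewrite <- Hj, <- Hm, hinf_at, Cnorm2_sqrt by (apply Rlt_le, dd_pos).
      unfold b. unfold Rdiv. rewrite Rmult_comm. lra. apply Wc_nonzero; intros; auto.
  - extensionality j; extensionality k. rewrite iter_Bop. unfold x.
    destruct (Compare_dec.le_dec n (k + n)) as [_|N]; [|lia]. replace (k + n - n)%nat with k by lia.
    rewrite hfull_far by lia.
    replace (Cmul (Wc w j k n) (Cmul (Cinv (Wc w j k n)) (hinf j k)))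
      with (Cmul (Cmul (Wc w j k n) (Cinv (Wc w j k n))) (hinf j k)) by cx.
    rewrite Cmul_inv. cx. apply Wc_nonzero; intros; auto.
Qed.

End Construction.

Lemma polyB_at_zero {J} (w : J -> nat -> Cx) cs (h : vec J) j k :
  w j k = C0 -> polyB w cs h j k = Cmul (hd C0 cs) (h j k).
Proof. intro Hw. destruct cs as [|c cs]; simpl. cx. unfold Bop. rewrite Hw. cx. Qed.

Lemma ebas_l2 {J} (p : J * nat) : in_l2 (ebas p).
Proof. exists 2. apply (sparse_l2 (ebas p) (fun t => (fst p, (snd p + t)%nat)) (fun t => if Nat.eq_dec t 0 then 1 else 0) 2).
  - intro t; destruct (Nat.eq_dec t 0); lra.
  - intro K. replace 2 with (2 * 1) by lra. apply sumup_geom. lra. intro t; destruct (Nat.eq_dec t 0); lra.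
    intro t; destruct (Nat.eq_dec t 0). subst; simpl; lra. pose proof (pow_half_bounds t); lra.
  - intros t1 t2 E. assert (E2 : (snd p + t1 = snd p + t2)%nat) by exact (f_equal snd E). lia.
  - intros j k H. exists O. unfold ebas in *.
    destruct (emi ((j, k) = p)) as [E|E]; [|exfalso; auto].
    subst p. simpl. rewrite Nat.add_0_r. split; auto. unfold Cnorm2; simpl; lra.
Qed.

Lemma l2_scal {J} (x : vec J) c : in_l2 x -> in_l2 (vscal c x).
Proof. intros [a Ha]. exists (Cnorm2 c * a). apply norm2_le_scal; auto. Qed.

Lemma ebas_at {J} (j : J) k : ebas (j, k) j k = (1, 0).
Proof. unfold ebas. destruct (emi _) as [_|N]; auto. exfalso; auto. Qed.

Lemma ebas_off {J} (j j' : J) k k' : (j', k') <> (j, k) -> ebas (j, k) j' k' = C0.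
Proof. intro H. unfold ebas. destruct (emi _); auto. exfalso; auto. Qed.

Lemma cyclic_two_zeros {J} (w : J -> nat -> Cx) : cyclic w ->
  forall j1 k1 j2 k2, w j1 k1 = C0 -> w j2 k2 = C0 -> j1 = j2 /\ k1 = k2.
Proof.
  intros [h [Hh Hcyc]] j1 k1 j2 k2 H1 H2.
  apply NNPP; intro Hne. assert (Hp : (j1, k1) <> (j2, k2)) by (intro E; inversion E; auto).
  set (a := h j1 k1). set (b := h j2 k2).
  destruct (emi (a = C0)) as [Ha|Ha].
  { destruct (Hcyc (ebas (j1, k1)) (ebas_l2 _) (1/2)) as [cs Hcs]. lra.
    specialize (Hcs ((j1, k1) :: nil) ltac:(repeat constructor; auto)).
    rewrite psum_cons in Hcs. unfold psum in Hcs; simpl in Hcs. unfold vsub in Hcs.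
    rewrite polyB_at_zero in Hcs by auto. fold a in Hcs. rewrite Ha in Hcs.
    rewrite (ebas_at j1 k1) in Hcs. unfold Cnorm2, Csub, Cmul, C0 in Hcs; simpl in Hcs. lra. }
  destruct (emi (b = C0)) as [Hb|Hb].
  { destruct (Hcyc (ebas (j2, k2)) (ebas_l2 _) (1/2)) as [cs Hcs]. lra.
    specialize (Hcs ((j2, k2) :: nil) ltac:(repeat constructor; auto)).
    rewrite psum_cons in Hcs. unfold psum in Hcs; simpl in Hcs. unfold vsub in Hcs.
    rewrite polyB_at_zero in Hcs by auto. fold b in Hcs. rewrite Hb in Hcs.
    rewrite (ebas_at j2 k2) in Hcs. unfold Cnorm2, Csub, Cmul, C0 in Hcs; simpl in Hcs. lra. }
  pose proof (Cnorm2_pos a Ha) as PA. pose proof (Cnorm2_pos b Hb) as PB.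
  set (y := vadd (vscal a (ebas (j1, k1))) (vscal (Cmul (-1, 0) b) (ebas (j2, k2)))).
  assert (Hy : in_l2 y) by (apply l2_add; apply l2_scal, ebas_l2).
  set (mn := Rmin (Cnorm2 a) (Cnorm2 b)).
  assert (Hmn : 0 < mn) by (unfold mn, Rmin; destruct (Rle_dec _ _); lra).
  assert (mn <= Cnorm2 a) by apply Rmin_l. assert (mn <= Cnorm2 b) by apply Rmin_r.
  destruct (Hcyc y Hy mn Hmn) as [cs Hcs].
  assert (ND : NoDup ((j1, k1) :: (j2, k2) :: nil)).
  { constructor. intros [E|[]]. auto. constructor. intros []. constructor. }
  specialize (Hcs _ ND). rewrite !psum_cons in Hcs. unfold psum in Hcs; simpl in Hcs. unfold vsub in Hcs.
  rewrite !polyB_at_zero in Hcs by auto. fold a b in Hcs.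
  unfold y, vadd, vscal in Hcs.
  rewrite (ebas_at j1 k1), (ebas_at j2 k2) in Hcs.
  rewrite (ebas_off j2 j1 k2 k1) in Hcs by auto.
  rewrite (ebas_off j1 j2 k1 k2) in Hcs by auto.
  set (c := hd C0 cs) in *.
  set (u := Cnorm2 (Csub (1, 0) c)). set (v := Cnorm2 (Cadd (1, 0) c)).
  assert (E1 : Cnorm2 (Csub (Cadd (Cmul a (1, 0)) (Cmul (Cmul (-1, 0) b) C0)) (Cmul c a)) = u * Cnorm2 a).
  { unfold u, Cnorm2, Csub, Cadd, Cmul, C0; simpl; ring. }
  assert (E2 : Cnorm2 (Csub (Cadd (Cmul a C0) (Cmul (Cmul (-1, 0) b) (1, 0))) (Cmul c b)) = v * Cnorm2 b).
  { unfold v, Cnorm2, Csub, Cadd, Cmul, C0; simpl; ring. }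
  simpl in E1, E2. rewrite E1, E2 in Hcs.
  assert (u + v = 2 + 2 * Cnorm2 c) by (unfold u, v, Cnorm2, Csub, Cadd; simpl; ring).
  pose proof (Cnorm2_nonneg c). assert (0 <= u) by apply Cnorm2_nonneg. assert (0 <= v) by apply Cnorm2_nonneg.
  nra.
Qed.

Theorem mainTheorem16
  (J : Type) (enc : J -> nat) (enc_inj : forall a b : J, enc a = enc b -> a = b)
  (j0 : J) (w : J -> nat -> Cx)
  (w_bdd : exists M : R, forall j k, Cnorm2 (w j k) <= M) :
  ((forall j k, w j k <> C0) -> cyclic w) /\
  ((forall j k, w j k <> C0) ->
     (exists g : vec J, in_all_ran w g /\
        forall j N, exists k, (N <= k)%nat /\ g j k <> C0) ->
     exists h : vec J, cyclic_vector w h /\ in_all_ran w h) /\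
  (cyclic w <->
     forall j1 k1 j2 k2, w j1 k1 = C0 -> w j2 k2 = C0 -> j1 = j2 /\ k1 = k2).
Proof.
  destruct w_bdd as [M HM].
  assert (P1 : (forall j k, w j k <> C0) -> exists h, cyclic_vector w h /\ in_all_ran w h).
  { intro Hnz. assert (Hz : forall j i, w j i = C0 -> j = j0 /\ S i = 0%nat) by (intros j i E; exfalso; apply (Hnz j i E)).
    exists (hfull J enc j0 w M j0 0). split.
    apply (hfull_cyclic J enc enc_inj j0 w M HM j0 0 Hz). left; reflexivity.
    apply (hfull_ran J enc j0 w M j0 0 Hz). left; reflexivity. reflexivity. }
  split; [|split].
  - intro Hnz. destruct (P1 Hnz) as [h [Hh _]]. exists h; auto.
  - intros Hnz _. apply P1; auto.
  - split. apply cyclic_two_zeros.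
    intro Hu. destruct (emi (exists j k, w j k = C0)) as [[jz [kz Ez]]|N].
    + exists (hfull J enc j0 w M jz (S kz)).
      apply (hfull_cyclic J enc enc_inj j0 w M HM jz (S kz)).
      intros j i E. destruct (Hu j i jz kz E Ez). subst; auto.
      right. simpl. auto.
    + destruct (P1 (fun j k E => N (ex_intro _ j (ex_intro _ k E)))) as [h [Hh _]]. exists h; auto.
Qed.
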